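(* Fix an integer $r\ge1$, let $\mathrm{J}=e^{2\pi\mathrm{I}/r}$ with $\mathrm{I}^2=-1$, and consider the curve $x=-y^r+\log y$, i.e. $e^x=ye^{-y^r}$, near $y=0$. For $i\in\{0,\dots,r-1\}$ define $$\xi_i=\frac{\mathrm{I}\sqrt2\,r^{-\frac12-\frac1r}\mathrm{J}^i}{r^{-1/r}\mathrm{J}^i-y},$$ and for $a\in\{0,\dots,r-1\}$ define $\tilde\xi_a=\sum_{i=0}^{r-1}r^{-1}\mathrm{J}^{-(a+1)i}\xi_i$. Then, as functions of $x$ expanded near $y=0$, $$\tilde\xi_a=\mathrm{I}\sqrt2\,r^{\frac12-\frac{a+1}r}\sum_{n=0}^\infty\frac{(rn+r-a-1)^n}{n!}e^{(rn+r-a-1)x}.$$ *)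

(* Defs.v *)
From Stdlib Require Import Reals.
From Coquelicot Require Import Coquelicot.
Open Scope R_scope.

Definition Cexp (z : C) : C :=
  (exp (Re z) * cos (Im z), exp (Re z) * sin (Im z)).

Definition CI : C := (0, 1).

Definition J (r : nat) : C := (cos (2 * PI / INR r), sin (2 * PI / INR r)).

Definition xi (r i : nat) (y : C) : C :=
  (CI * RtoC (sqrt 2) * RtoC (Rpower (INR r) (- / 2 - / INR r)) * Cpow (J r) i
   / (RtoC (Rpower (INR r) (- / INR r)) * Cpow (J r) i - y))%C.

Definition xi_tilde (r a : nat) (y : C) : C :=
  @sum_n C_AbelianMonoid
    (fun i => (/ RtoC (INR r) * Cpow (/ J r) ((a + 1) * i) * xi r i y)%C)
    (r - 1).

(* Main.v *)
Require Import Defs.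
From Stdlib Require Import Reals Arith Lia Lra.
From Coquelicot Require Import Coquelicot.
Open Scope R_scope.

Lemma Ceps (a : nat -> C) (l : C) :
  is_series a l <-> forall eps, 0 < eps -> exists N, forall n, (N <= n)%nat ->
     Cmod (sum_n a n - l)%C < eps.
Proof.
  unfold is_series. split.
  - intros H eps He.
    pose proof (proj1 (@filterlim_locally_ball_norm C_AbsRing nat C_NormedModule eventually _ (sum_n a) l) H) as H0.
    destruct (H0 (mkposreal eps He)) as [N HN].
    exists N. intros n Hn. specialize (HN n Hn). unfold ball_norm in HN.
    exact HN.
  - intros H. apply (proj2 (@filterlim_locally_ball_norm C_AbsRing nat C_NormedModule eventually _ (sum_n a) l)).
    intros eps.
    destruct (H eps (cond_pos eps)) as [N HN]. exists N.
    intros n Hn. unfold ball_norm. change (Cmod (sum_n a n - l)%C < eps). apply HN; lia.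
Qed.

Lemma Reps (a : nat -> R) (l : R) :
  is_series a l <-> forall eps, 0 < eps -> exists N, forall n, (N <= n)%nat ->
     Rabs (sum_n a n - l) < eps.
Proof.
  unfold is_series. split.
  - intros H eps He.
    pose proof (proj1 (@filterlim_locally_ball_norm R_AbsRing nat R_NormedModule eventually _ (sum_n a) l) H) as H0.
    destruct (H0 (mkposreal eps He)) as [N HN].
    exists N. intros n Hn. specialize (HN n Hn). unfold ball_norm in HN.
    exact HN.
  - intros H. apply (proj2 (@filterlim_locally_ball_norm R_AbsRing nat R_NormedModule eventually _ (sum_n a) l)).
    intros eps.
    destruct (H eps (cond_pos eps)) as [N HN]. exists N.
    intros n Hn. unfold ball_norm. apply HN; lia.
Qed.

Lemma Cmod_sum_le (f : nat -> C) M :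
  Cmod (sum_n f M) <= sum_n (fun n => Cmod (f n)) M.
Proof.
  induction M.
  - rewrite !sum_O. lra.
  - rewrite !sum_Sn. eapply Rle_trans. apply Cmod_triangle.
    change (plus (sum_n (fun n => Cmod (f n)) M) (Cmod (f (S M)))) with
      (sum_n (fun n => Cmod (f n)) M + Cmod (f (S M))). lra.
Qed.

Lemma sum_le_R (f g : nat -> R) M : (forall n, (n <= M)%nat -> f n <= g n) ->
  sum_n f M <= sum_n g M.
Proof.
  induction M; intros H.
  - rewrite !sum_O. apply H; lia.
  - rewrite !sum_Sn. change (sum_n f M + f (S M) <= sum_n g M + g (S M)).
    assert (sum_n f M <= sum_n g M) by (apply IHM; intros; apply H; lia).
    specialize (H (S M) (le_n _)). lra.
Qed.

Lemma sum_const_R (c : R) M : sum_n (fun _ => c) M = INR (S M) * c.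
Proof.
  induction M.
  - rewrite sum_O. simpl. lra.
  - rewrite sum_Sn. change (sum_n (fun _ => c) M + c = INR (S (S M)) * c).
    rewrite IHM. rewrite (S_INR (S M)). lra.
Qed.

Lemma FL {G : AbelianMonoid} (f : nat -> nat -> G) M :
  sum_n (fun N => sum_n (fun n => f n (N - n)%nat) N) M =
  sum_n (fun n => sum_n (fun k => f n k) (M - n)%nat) M.
Proof.
  induction M.
  - rewrite !sum_O. simpl. reflexivity.
  - rewrite sum_Sn. rewrite IHM. rewrite sum_Sn.
    rewrite (sum_Sn (fun n => sum_n (fun k => f n k) (S M - n)%nat)).
    rewrite (sum_n_ext_loc (fun n => sum_n (fun k => f n k) (S M - n)%nat)
      (fun n => plus (sum_n (fun k => f n k) (M - n)%nat) (f n (S M - n)%nat))).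
    2:{ intros n Hn. replace (S M - n)%nat with (S (M - n)) by lia.
        rewrite sum_Sn. reflexivity. }
    rewrite sum_n_plus. rewrite Nat.sub_diag. rewrite sum_O.
    rewrite plus_assoc. reflexivity.
Qed.

Lemma Cmod_sub_sym (x y : C) : Cmod (x - y)%C = Cmod (y - x)%C.
Proof.
  replace (x - y)%C with (- (y - x))%C by ring. apply Cmod_opp.
Qed.

Lemma Cmod_sub_tri (x y z : C) : Cmod (x - z)%C <= Cmod (x - y)%C + Cmod (y - z)%C.
Proof.
  replace (x - z)%C with ((x - y) + (y - z))%C by ring. apply Cmod_triangle.
Qed.

Lemma TL (g : nat -> C) (A : C) (c q : R) : 0 <= c -> 0 <= q < 1 ->
  (forall k, Cmod (g k) <= c * q ^ k) -> is_series g A ->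
  forall K, Cmod (A - sum_n g K)%C <= c * q ^ (S K) / (1 - q).
Proof.
  intros Hc Hq Hg HA K.
  assert (Hj : forall j, Cmod (sum_n g (K + j) - sum_n g K)%C <= c * q ^ (S K) * (1 - q ^ j) / (1 - q)).
  { induction j.
    - rewrite Nat.add_0_r. replace (sum_n g K - sum_n g K)%C with (RtoC 0) by ring.
      rewrite Cmod_0. simpl. replace (c * q ^ K * q * (1 - 1) / (1 - q)) with 0 by (field; lra). lra.
    - replace (K + S j)%nat with (S (K + j)) by lia. rewrite sum_Sn.
      change (Cmod (sum_n g (K + j) + g (S (K + j)) - sum_n g K)%C <= c * q ^ S K * (1 - q ^ S j) / (1 - q)).
      replace (sum_n g (K + j) + g (S (K + j)) - sum_n g K)%C with
        ((sum_n g (K + j) - sum_n g K) + g (S (K + j)))%C by ring.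
      eapply Rle_trans. apply Cmod_triangle.
      specialize (Hg (S (K + j))).
      replace (q ^ S (K + j)) with (q ^ S K * q ^ j) in Hg by (rewrite <- pow_add; f_equal; lia).
      replace (c * q ^ S K * (1 - q ^ S j) / (1 - q)) with
        (c * q ^ S K * (1 - q ^ j) / (1 - q) + c * (q ^ S K * q ^ j)) by (simpl; field; lra).
      lra. }
  apply le_epsilon. intros eps He.
  destruct (proj1 (Ceps g A) HA eps He) as [N HN].
  specialize (HN (K + N)%nat ltac:(lia)). specialize (Hj N).
  eapply Rle_trans. apply (Cmod_sub_tri _ (sum_n g (K + N))).
  rewrite Cmod_sub_sym in HN.
  assert (c * q ^ S K * (1 - q ^ N) / (1 - q) <= c * q ^ S K / (1 - q)).
  { apply Rmult_le_compat_r. apply Rlt_le, Rinv_0_lt_compat; lra.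
    assert (0 <= q ^ N) by (apply pow_le; lra).
    assert (0 <= c * q ^ S K) by (apply Rmult_le_pos; [lra| apply pow_le; lra]). nra. }
  lra.
Qed.

Lemma sum_n_minus_C (f g : nat -> C) M :
  (sum_n f M - sum_n g M)%C = sum_n (fun n => f n - g n)%C M.
Proof.
  induction M.
  - rewrite !sum_O. reflexivity.
  - rewrite !sum_Sn. rewrite <- IHM. change (
    (sum_n f M + f (S M) - (sum_n g M + g (S M)))%C =
    ((sum_n f M - sum_n g M) + (f (S M) - g (S M)))%C). ring.
Qed.

Lemma GF_core (b : nat -> nat -> C) (A : nat -> C) (c q : R) :
  0 <= c -> 0 <= q < 1 -> (forall n k, Cmod (b n k) <= c * q ^ (n + k)) ->
  (forall n, is_series (b n) (A n)) ->
  forall M, Cmod (sum_n A M - sum_n (fun N => sum_n (fun n => b n (N - n)%nat) N) M)%C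
     <= INR (S M) * (c * q ^ (S M) / (1 - q)).
Proof.
  intros Hc Hq Hb HA M.
  rewrite FL. rewrite sum_n_minus_C.
  eapply Rle_trans. apply Cmod_sum_le.
  rewrite <- sum_const_R. apply sum_le_R. intros n Hn.
  assert (H := TL (b n) (A n) (c * q ^ n) q ltac:(apply Rmult_le_pos; [lra|apply pow_le; lra]) Hq).
  assert (Hb' : forall k, Cmod (b n k) <= c * q ^ n * q ^ k).
  { intros k. rewrite Rmult_assoc, <- pow_add. apply Hb. }
  specialize (H Hb' (HA n) (M - n)%nat).
  replace (c * q ^ S M) with (c * q ^ n * q ^ S (M - n)). exact H.
  rewrite Rmult_assoc, <- pow_add. f_equal. f_equal. lia.
Qed.

Lemma INR_le_pow2 n : INR n <= 2 ^ n.
Proof.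
  induction n. simpl; lra.
  rewrite S_INR. simpl. assert (1 <= 2 ^ n) by (apply pow_R1_Rle; lra). lra.
Qed.

Lemma GF_small (c q : R) : 0 <= c -> 0 <= q < /2 ->
  forall eps, 0 < eps -> exists N, forall M, (N <= M)%nat ->
   INR (S M) * (c * q ^ (S M) / (1 - q)) < eps.
Proof.
  intros Hc Hq eps He.
  assert (H2q : Rabs (2 * q) < 1) by (rewrite Rabs_right; lra).
  destruct (pow_lt_1_zero (2 * q) H2q (eps / (c * 2 + 1))) as [N HN].
  { apply Rdiv_lt_0_compat; lra. }
  exists N. intros M HM. specialize (HN (S M) ltac:(lia)).
  rewrite Rabs_right in HN by (apply Rle_ge, pow_le; lra).
  rewrite Rpow_mult_distr in HN.
  assert (H1 : INR (S M) * q ^ S M <= 2 ^ S M * q ^ S M).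
  { apply Rmult_le_compat_r. apply pow_le; lra. apply INR_le_pow2. }
  assert (0 <= q ^ S M) by (apply pow_le; lra).
  assert (0 <= INR (S M)) by apply pos_INR.
  replace (INR (S M) * (c * q ^ S M / (1 - q))) with (c / (1 - q) * (INR (S M) * q ^ S M)) by (field; lra).
  assert (c / (1 - q) <= c * 2).
  { unfold Rdiv. assert (/ (1 - q) <= 2). { replace 2 with (/ / 2) by field.
      apply Rinv_le_contravar; lra. } nra. }
  assert (2 ^ S M * q ^ S M < eps / (c * 2 + 1)) by lra.
  assert (0 <= c / (1 - q)) by (apply Rdiv_le_0_compat; lra).
  assert (Hx: eps / (c * 2 + 1) * (c * 2 + 1) = eps) by (field; lra).
  assert (0 <= INR (S M) * q ^ S M) by nra.
  nra.
Qed.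

Lemma GF (b : nat -> nat -> C) (A : nat -> C) (c q : R) :
  0 <= c -> 0 <= q < /2 -> (forall n k, Cmod (b n k) <= c * q ^ (n + k)) ->
  (forall n, is_series (b n) (A n)) ->
  forall L, is_series A L <-> is_series (fun N => sum_n (fun n => b n (N - n)%nat) N) L.
Proof.
  intros Hc Hq Hb HA L.
  pose proof (GF_core b A c q Hc ltac:(lra) Hb HA) as Hcore.
  pose proof (GF_small c q Hc Hq) as Hsm.
  split; intros H; apply Ceps; intros eps He; apply Ceps with (eps := eps / 2) in H;
    try lra; destruct H as [N1 H1]; destruct (Hsm (eps/2) ltac:(lra)) as [N2 H2];
    exists (N1 + N2)%nat; intros M HM; specialize (H1 M ltac:(lia));
    specialize (H2 M ltac:(lia)); specialize (Hcore M).
  - eapply Rle_lt_trans. apply (Cmod_sub_tri _ (sum_n A M)).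
    rewrite Cmod_sub_sym in Hcore. lra.
  - eapply Rle_lt_trans. apply (Cmod_sub_tri _ (sum_n (fun N => sum_n (fun n => b n (N - n)%nat) N) M)).
    lra.
Qed.

Ltac cceq := match goal with |- ?a = ?b => change (@eq C a b) end.

Lemma sumC_S (f : nat -> C) N : sum_n f (S N) = (sum_n f N + f (S N))%C.
Proof. rewrite sum_Sn. reflexivity. Qed.

Lemma sumC_plus (f g : nat -> C) N :
  sum_n (fun n => f n + g n)%C N = (sum_n f N + sum_n g N)%C.
Proof.
  induction N. rewrite !sum_O. reflexivity.
  rewrite !sumC_S, IHN. cceq. ring.
Qed.

Lemma sumC_mult_l (c : C) (f : nat -> C) N :
  sum_n (fun n => c * f n)%C N = (c * sum_n f N)%C.
Proof.
  induction N. rewrite !sum_O. reflexivity.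
  rewrite !sumC_S, IHN. cceq. ring.
Qed.

Lemma sumC_shift (h : nat -> C) N :
  sum_n h (S N) = (h O + sum_n (fun n => h (S n)) N)%C.
Proof.
  induction N. rewrite sumC_S, !sum_O. reflexivity.
  rewrite sumC_S, IHN, sumC_S. cceq. ring.
Qed.

Lemma sumC_ext (f g : nat -> C) N : (forall n, (n <= N)%nat -> f n = g n) ->
  sum_n f N = sum_n g N.
Proof. apply sum_n_ext_loc. Qed.

Lemma sum_RtoC (f : nat -> R) N : sum_n (fun n => RtoC (f n)) N = RtoC (sum_n f N).
Proof.
  induction N. rewrite !sum_O. reflexivity.
  rewrite sumC_S, sum_Sn, IHN. change (RtoC (sum_n f N) + RtoC (f (S N)) = RtoC (sum_n f N + f (S N)))%C.
  rewrite RtoC_plus. reflexivity.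
Qed.

Definition ef (z : C) (n : nat) : C := (RtoC (/ INR (fact n)) * z ^ n)%C.

Lemma ef_S z n : (RtoC (INR (S n)) * ef z (S n))%C = (z * ef z n)%C.
Proof.
  unfold ef. rewrite Cpow_S.
  replace (RtoC (INR (S n)) * (RtoC (/ INR (fact (S n))) * (z * z ^ n)))%C with
    (RtoC (INR (S n) * / INR (fact (S n))) * (z * z ^ n))%C.
  2:{ rewrite RtoC_mult. ring. }
  replace (INR (S n) * / INR (fact (S n))) with (/ INR (fact n)). ring.
  rewrite fact_simpl, mult_INR. field. split; apply not_0_INR.
  apply fact_neq_0. lia.
Qed.

Lemma ef_0 z : ef z 0 = RtoC 1.
Proof. unfold ef. simpl. rewrite Rinv_1. ring. Qed.

Definition Dsum (u v : C) N := sum_n (fun n => ef u n * ef v (N - n))%C N.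

Lemma Dsum_S u v N : (RtoC (INR (S N)) * Dsum u v (S N))%C = ((u + v) * Dsum u v N)%C.
Proof.
  unfold Dsum.
  rewrite <- sumC_mult_l.
  rewrite (sumC_ext _ (fun n => RtoC (INR n) * (ef u n * ef v (S N - n)) +
        RtoC (INR (S N - n)) * (ef u n * ef v (S N - n)))%C).
  2:{ intros n Hn. rewrite <- Cmult_plus_distr_r, <- RtoC_plus, <- plus_INR.
      f_equal. f_equal. f_equal. lia. }
  rewrite sumC_plus.
  rewrite sumC_shift. simpl (INR 0). rewrite Cmult_0_l, Cplus_0_l.
  rewrite sumC_S. rewrite Nat.sub_diag. simpl (INR 0). rewrite Cmult_0_l, Cplus_0_r.
  rewrite (sumC_ext (fun n => RtoC (INR (S n)) * (ef u (S n) * ef v (S N - S n)))%C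
        (fun n => u * (ef u n * ef v (N - n)))%C).
  2:{ intros n Hn. replace (S N - S n)%nat with (N - n)%nat by lia.
      rewrite Cmult_assoc, ef_S. cceq; ring. }
  rewrite (sumC_ext (fun n => RtoC (INR (S N - n)) * (ef u n * ef v (S N - n)))%C
        (fun n => v * (ef u n * ef v (N - n)))%C).
  2:{ intros n Hn. replace (S N - n)%nat with (S (N - n)) by lia.
      replace (RtoC (INR (S (N - n))) * (ef u n * ef v (S (N - n))))%C with
        (ef u n * (RtoC (INR (S (N - n))) * ef v (S (N - n))))%C by (cceq; ring).
      rewrite ef_S. cceq; ring. }
  rewrite !sumC_mult_l. cceq; ring.
Qed.

Lemma Cmult_reg_l (k x y : C) : k <> RtoC 0 -> (k * x)%C = (k * y)%C -> x = y.
Proof. intros Hk H. replace x with (/k * (k*x))%C by (field; auto). rewrite H. field; auto. Qed.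

Lemma binomC u v N : Dsum u v N = ef (u + v) N.
Proof.
  induction N.
  - unfold Dsum. rewrite sum_O. simpl (0 - 0)%nat. rewrite !ef_0. cceq; ring.
  - assert (H := Dsum_S u v N). rewrite IHN in H.
    assert (H2 := ef_S (u + v) N). rewrite <- H in H2.
    assert (Hn : RtoC (INR (S N)) <> RtoC 0).
    { intro E. apply RtoC_inj in E. apply (not_0_INR (S N)); auto. }
    apply (Cmult_reg_l _ _ _ Hn). rewrite H2. reflexivity.
Qed.

Lemma sum_pair (f g : nat -> R) N :
  sum_n (fun n => (f n, g n) : C) N = (sum_n f N, sum_n g N).
Proof.
  induction N. rewrite !sum_O. reflexivity.
  rewrite sumC_S, !sum_Sn, IHN. reflexivity.
Qed.

Lemma series_pair (f g : nat -> R) l1 l2 : is_series f l1 -> is_series g l2 ->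
  is_series (fun n => (f n, g n) : C) (l1, l2).
Proof.
  intros H1 H2. apply Ceps. intros eps He.
  destruct (proj1 (Reps f l1) H1 (eps/4) ltac:(lra)) as [N1 HN1].
  destruct (proj1 (Reps g l2) H2 (eps/4) ltac:(lra)) as [N2 HN2].
  exists (N1 + N2)%nat. intros n Hn. rewrite sum_pair.
  specialize (HN1 n ltac:(lia)). specialize (HN2 n ltac:(lia)).
  eapply Rle_lt_trans. apply Cmod_2Rmax. simpl.
  assert (sqrt 2 <= 2).
  { rewrite <- (sqrt_square 2) at 2 by lra. apply sqrt_le_1; lra. }
  assert (0 <= sqrt 2) by apply sqrt_pos.
  assert (Rmax (Rabs (sum_n f n + - l1)) (Rabs (sum_n g n + - l2)) < eps / 4).
  { apply Rmax_lub_lt; assumption. }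
  assert (0 <= Rmax (Rabs (sum_n f n + - l1)) (Rabs (sum_n g n + - l2))).
  { eapply Rle_trans. apply Rabs_pos. apply Rmax_l. }
  nra.
Qed.

Lemma series_zero_R : is_series (fun _ : nat => 0) 0.
Proof.
  apply Reps. intros eps He. exists O. intros n _.
  rewrite sum_const_R. rewrite Rmult_0_r, Rminus_0_r, Rabs_R0. lra.
Qed.

Lemma sum_mono_R (f : nat -> R) : (forall n, 0 <= f n) -> forall N j, sum_n f N <= sum_n f (N + j).
Proof.
  intros Hf N j. induction j. rewrite Nat.add_0_r. lra.
  replace (N + S j)%nat with (S (N + j)) by lia. rewrite sum_Sn.
  specialize (Hf (S (N + j))). change (sum_n f N <= sum_n f (N + j) + f (S (N+j))). lra.
Qed.

Lemma partial_le (f : nat -> R) l : (forall n, 0 <= f n) -> is_series f l ->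
  forall N, sum_n f N <= l.
Proof.
  intros Hf Hl N. apply Rnot_lt_le. intros Hlt.
  destruct (proj1 (Reps f l) Hl (sum_n f N - l) ltac:(lra)) as [M HM].
  specialize (HM (N + M)%nat ltac:(lia)).
  pose proof (sum_mono_R f Hf N M).
  rewrite Rabs_right in HM by lra. lra.
Qed.

Lemma term_le_sum (f : nat -> R) : (forall n, 0 <= f n) -> forall n, f n <= sum_n f n.
Proof.
  intros Hf n. destruct n. rewrite sum_O. lra.
  rewrite sum_Sn. change (f (S n) <= sum_n f n + f (S n)).
  assert (0 <= sum_n f n). { eapply Rle_trans. apply (Hf O). replace (f O) with (sum_n f 0) by apply sum_O.
    replace n with (0 + n)%nat by lia. apply sum_mono_R; auto. }
  lra.
Qed.

Lemma exp_bound x n : 0 <= x -> x ^ n / INR (fact n) <= exp x.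
Proof.
  intros Hx. pose proof (is_exp_Reals x) as H. unfold is_pseries in H.
  assert (Hf : forall k, 0 <= scal (pow_n x k) (/ INR (fact k))).
  { intros k. change (0 <= pow_n x k * / INR (fact k)). rewrite pow_n_pow.
    apply Rmult_le_pos. apply pow_le; auto. apply Rlt_le, Rinv_0_lt_compat, INR_fact_lt_0. }
  eapply Rle_trans. 2: apply (partial_le _ _ Hf H n).
  eapply Rle_trans. 2: apply (term_le_sum _ Hf n).
  change (x ^ n / INR (fact n) <= pow_n x n * / INR (fact n)). apply Req_le; unfold Rdiv; f_equal; symmetry; apply pow_n_pow.
Qed.

Lemma Cmod_ef z n : Cmod (ef z n) = Cmod z ^ n / INR (fact n).
Proof.
  unfold ef. rewrite Cmod_mult, Cmod_R, Cmod_pow.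
  rewrite Rabs_right. lra. apply Rle_ge, Rlt_le, Rinv_0_lt_compat, INR_fact_lt_0.
Qed.

Lemma ef_bound z n : Cmod (ef z n) <= exp (4 * Cmod z) * (/ 4) ^ n.
Proof.
  rewrite Cmod_ef.
  pose proof (exp_bound (4 * Cmod z) n ltac:(pose proof (Cmod_ge_0 z); lra)).
  rewrite Rpow_mult_distr in H.
  assert (0 < (/4) ^ n) by (apply pow_lt; lra).
  replace (Cmod z ^ n / INR (fact n)) with (4 ^ n * Cmod z ^ n / INR (fact n) * (/4)^n).
  apply Rmult_le_compat_r; lra.
  assert (E: 4^n * (/4)^n = 1).
  { rewrite <- Rpow_mult_distr. replace (4 * /4) with 1 by field. apply pow1. }
  replace (4^n * Cmod z^n / INR (fact n) * (/4)^n) with ((4^n * (/4)^n) * (Cmod z^n / INR (fact n))) by (unfold Rdiv; ring).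
  rewrite E; ring.
Qed.

Lemma RtoC_mul_pair (s : R) (w : C) : (RtoC s * w)%C = (s * fst w, s * snd w).
Proof. destruct w. unfold Cmult, RtoC. simpl. f_equal; ring. Qed.

Lemma ef_real_series a : is_series (ef (RtoC a)) (RtoC (exp a)).
Proof.
  pose proof (is_exp_Reals a) as H. unfold is_pseries in H.
  assert (H2 := series_pair _ _ _ _ H series_zero_R).
  eapply is_series_ext. 2: exact H2.
  intros n. unfold ef. rewrite <- RtoC_pow, <- RtoC_mult.
  change (scal (pow_n a n) (/ INR (fact n))) with (pow_n a n * / INR (fact n)).
  rewrite pow_n_pow. unfold RtoC. f_equal. apply Rmult_comm.
Qed.

Ltac rreq := match goal with |- ?a = ?b => change (@eq R a b) end.

Lemma CI_sq : (CI ^ 2)%C = RtoC (-1).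
Proof. unfold CI, RtoC. simpl. unfold Cmult. simpl. f_equal; ring. Qed.

Lemma CI_pow_even k : (CI ^ (2 * k))%C = RtoC ((-1) ^ k).
Proof. rewrite Cpow_mult_r, CI_sq, RtoC_pow. reflexivity. Qed.

Lemma CI_pow_odd k : (CI ^ (2 * k + 1))%C = (0, (-1) ^ k).
Proof.
  rewrite Cpow_add_r, CI_pow_even, Cpow_1_r. unfold CI, RtoC, Cmult. simpl. f_equal; ring.
Qed.

Definition aCos (n : nat) : R := fst (CI ^ n)%C / INR (fact n).
Definition aSin (n : nat) : R := snd (CI ^ n)%C / INR (fact n).

Lemma zero_pseries (x : R) : is_pseries (fun _ : nat => 0) x 0.
Proof.
  unfold is_pseries. eapply is_series_ext. 2: apply series_zero_R.
  intros n. change (0 = pow_n x n * 0). ring.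
Qed.

Lemma cos_series b : is_series (fun n => b ^ n * aCos n) (cos b).
Proof.
  assert (He : is_pseries (fun k => aCos (2 * k)) (b ^ 2) (cos b)).
  { unfold cos. destruct (exist_cos (Rsqr b)) as [l Hl].
    unfold cos_in in Hl. apply is_series_Reals in Hl.
    unfold is_pseries. eapply is_series_ext. 2: exact Hl.
    intros k. simpl. change (cos_n k * b² ^ k = (b * (b * 1)) ^ k * aCos (2 * k)). unfold aCos. rewrite CI_pow_even. simpl fst.
    unfold cos_n, Rsqr. rreq. replace (b * (b * 1)) with (b * b) by ring. unfold Rdiv. ring. }
  assert (Ho : is_pseries (fun k => aCos (2 * k + 1)) (b ^ 2) 0).
  { eapply is_pseries_ext. 2: apply zero_pseries. intros k. unfold aCos.
    rewrite CI_pow_odd. simpl fst. unfold Rdiv. rreq. ring. }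
  pose proof (is_pseries_odd_even _ _ _ _ He Ho) as H.
  rewrite Rmult_0_r, Rplus_0_r in H. unfold is_pseries in H.
  eapply is_series_ext. 2: exact H. intros n. simpl.
  change (pow_n b n * aCos n = b ^ n * aCos n). apply (f_equal2 Rmult); [apply pow_n_pow|reflexivity].
Qed.

Lemma sin_series b : is_series (fun n => b ^ n * aSin n) (sin b).
Proof.
  unfold sin. destruct (exist_sin (Rsqr b)) as [l Hl].
  assert (Ho : is_pseries (fun k => aSin (2 * k + 1)) (b ^ 2) l).
  { unfold sin_in in Hl. apply is_series_Reals in Hl.
    unfold is_pseries. eapply is_series_ext. 2: exact Hl.
    intros k. simpl. change (sin_n k * b² ^ k = (b * (b * 1)) ^ k * aSin (2 * k + 1)). unfold aSin. rewrite CI_pow_odd. simpl snd.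
    unfold sin_n, Rsqr. rreq. replace (b * (b * 1)) with (b * b) by ring. unfold Rdiv. ring. }
  assert (He : is_pseries (fun k => aSin (2 * k)) (b ^ 2) 0).
  { eapply is_pseries_ext. 2: apply zero_pseries. intros k. unfold aSin.
    rewrite CI_pow_even. simpl snd. unfold Rdiv. rreq. ring. }
  pose proof (is_pseries_odd_even _ _ _ _ He Ho) as H.
  rewrite Rplus_0_l in H. unfold is_pseries in H.
  eapply is_series_ext. 2: exact H. intros n. simpl.
  change (pow_n b n * aSin n = b ^ n * aSin n). apply (f_equal2 Rmult); [apply pow_n_pow|reflexivity].
Qed.

Lemma ef_imag_series b : is_series (ef (CI * RtoC b)) (cos b, sin b).
Proof.
  assert (H := series_pair _ _ _ _ (cos_series b) (sin_series b)).
  eapply is_series_ext. 2: exact H. intros n. unfold ef.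
  rewrite Cpow_mult_l, <- RtoC_pow.
  replace (RtoC (/ INR (fact n)) * ((CI ^ n) * RtoC (b ^ n)))%C with
    (RtoC (/ INR (fact n) * b ^ n) * (CI ^ n))%C by (rewrite RtoC_mult; ring).
  rewrite RtoC_mul_pair. unfold aCos, aSin. f_equal; unfold Rdiv; ring.
Qed.

Lemma Cexp_series z : is_series (ef z) (Cexp z).
Proof.
  destruct z as [a b].
  set (w := (cos b, sin b) : C).
  set (bb := fun n k => (ef (RtoC a) n * ef (CI * RtoC b) k)%C).
  set (A := fun n => (ef (RtoC a) n * w)%C).
  assert (Hb : forall n k, Cmod (bb n k) <= (exp (4 * Cmod (RtoC a)) * exp (4 * Cmod (CI * RtoC b))) * (/4) ^ (n + k)).
  { intros n k. unfold bb. rewrite Cmod_mult, pow_add.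
    pose proof (ef_bound (RtoC a) n). pose proof (ef_bound (CI * RtoC b) k).
    pose proof (Cmod_ge_0 (ef (RtoC a) n)). pose proof (Cmod_ge_0 (ef (CI * RtoC b) k)).
    replace (exp (4 * Cmod (RtoC a)) * exp (4 * Cmod (CI * RtoC b)) * ((/ 4) ^ n * (/ 4) ^ k))
      with ((exp (4 * Cmod (RtoC a)) * (/ 4) ^ n) * (exp (4 * Cmod (CI * RtoC b)) * (/ 4) ^ k)) by ring.
    apply Rmult_le_compat; auto. }
  assert (HA : forall n, is_series (bb n) (A n)).
  { intros n. unfold bb, A. pose proof (is_series_scal (ef (RtoC a) n) _ _ (ef_imag_series b)) as H.
    eapply is_series_ext. 2: exact H. intros k. reflexivity. }
  assert (Hc : 0 <= exp (4 * Cmod (RtoC a)) * exp (4 * Cmod (CI * RtoC b))).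
  { apply Rmult_le_pos; apply Rlt_le, exp_pos. }
  pose proof (GF bb A _ (/4) Hc ltac:(lra) Hb HA (Cexp (a, b))) as [HG _].
  assert (HS : is_series A (Cexp (a, b))).
  { pose proof (is_series_scal w _ _ (ef_real_series a)) as H.
    replace (Cexp (a, b)) with (w * RtoC (exp a))%C.
    eapply is_series_ext. 2: exact H. intros n. unfold A. change (w * ef (RtoC a) n = ef (RtoC a) n * w)%C. ring.
    unfold Cexp, w. simpl. unfold RtoC, Cmult. simpl. f_equal; ring. }
  specialize (HG HS).
  eapply is_series_ext. 2: exact HG. intros N. simpl.
  change (Dsum (RtoC a) (CI * RtoC b) N = ef (a, b) N). rewrite binomC. f_equal.
  unfold CI, RtoC, Cmult, Cplus. simpl. f_equal; ring.
Qed.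


Lemma sumR_S (f : nat -> R) N : sum_n f (S N) = sum_n f N + f (S N).
Proof. rewrite sum_Sn. reflexivity. Qed.

Lemma sumR_plus (f g : nat -> R) N :
  sum_n (fun n => f n + g n) N = sum_n f N + sum_n g N.
Proof. induction N. rewrite !sum_O. reflexivity. rewrite !sumR_S, IHN. rreq; ring. Qed.

Lemma sumR_mult_l (c : R) (f : nat -> R) N :
  sum_n (fun n => c * f n) N = c * sum_n f N.
Proof. induction N. rewrite !sum_O. reflexivity. rewrite !sumR_S, IHN. rreq; ring. Qed.

Lemma sumR_shift (h : nat -> R) N : sum_n h (S N) = h O + sum_n (fun n => h (S n)) N.
Proof. induction N. rewrite sumR_S, !sum_O. reflexivity. rewrite sumR_S, IHN, sumR_S. rreq; ring. Qed.

Lemma sumR_ext (f g : nat -> R) N : (forall n, (n <= N)%nat -> f n = g n) ->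
  sum_n f N = sum_n g N.
Proof. apply sum_n_ext_loc. Qed.

Definition Wt (N n : nat) : R := (-1) ^ (N - n) / (INR (fact n) * INR (fact (N - n))).
Definition Tsum (N : nat) (f : nat -> R) : R := sum_n (fun n => Wt N n * f n) N.
Definition Df (f : nat -> R) (n : nat) : R := f (S n) - f n.

Lemma fact_pos n : 0 < INR (fact n).
Proof. apply INR_fact_lt_0. Qed.

Lemma Wt_left N n : INR (S n) * Wt (S N) (S n) = Wt N n.
Proof.
  unfold Wt. replace (S N - S n)%nat with (N - n)%nat by lia.
  rewrite fact_simpl, mult_INR. pose proof (fact_pos n). pose proof (fact_pos (N - n)).
  assert (0 < INR (S n)) by (apply lt_0_INR; lia). field. lra.
Qed.

Lemma Wt_right N n : (n <= N)%nat -> INR (S N - n) * Wt (S N) n = - Wt N n.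
Proof.
  intros Hn. unfold Wt. replace (S N - n)%nat with (S (N - n)) by lia.
  rewrite fact_simpl, mult_INR. pose proof (fact_pos n). pose proof (fact_pos (N - n)).
  assert (0 < INR (S (N - n))) by (apply lt_0_INR; lia). simpl pow. field. lra.
Qed.

Lemma Tsum_S N f : INR (S N) * Tsum (S N) f = Tsum N (Df f).
Proof.
  unfold Tsum. rewrite <- sumR_mult_l.
  rewrite (sumR_ext _ (fun n => INR n * Wt (S N) n * f n + INR (S N - n) * Wt (S N) n * f n)).
  2:{ intros n Hn. rewrite <- Rmult_plus_distr_r, <- Rmult_plus_distr_r, <- plus_INR.
      replace (n + (S N - n))%nat with (S N) by lia. rreq; ring. }
  rewrite sumR_plus. rewrite sumR_shift. simpl (INR 0). rewrite Rmult_0_l, Rmult_0_l, Rplus_0_l.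
  rewrite sumR_S. rewrite Nat.sub_diag. simpl (INR 0). rewrite !Rmult_0_l, Rplus_0_r.
  rewrite (sumR_ext (fun n => INR (S n) * Wt (S N) (S n) * f (S n)) (fun n => Wt N n * f (S n))).
  2:{ intros n Hn. rewrite Wt_left. reflexivity. }
  rewrite (sumR_ext (fun n => INR (S N - n) * Wt (S N) n * f n) (fun n => - (Wt N n * f n))).
  2:{ intros n Hn. rewrite Wt_right by lia. rreq; ring. }
  rewrite <- sumR_plus. apply sumR_ext. intros n _. unfold Df. rreq; ring.
Qed.

Fixpoint Poly (d : nat) (f : nat -> R) (L : R) : Prop :=
  match d with
  | O => forall n, f n = L
  | S d' => Poly d' (Df f) (INR d * L)
  end.

Lemma Poly_ext d : forall f g L, Poly d f L -> (forall n, f n = g n) -> Poly d g L.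
Proof.
  induction d; intros f g L H E; simpl in *.
  - intros n. rewrite <- E. auto.
  - apply (IHd _ _ _ H). intros n. unfold Df. rewrite !E. reflexivity.
Qed.

Lemma Poly_L d f L M : Poly d f L -> L = M -> Poly d f M.
Proof. intros H E. subst. auto. Qed.

Lemma Poly_plus d : forall f g L M, Poly d f L -> Poly d g M ->
  Poly d (fun n => f n + g n) (L + M).
Proof.
  induction d; intros f g L M Hf Hg; simpl in *.
  - intros n. rewrite Hf, Hg. reflexivity.
  - eapply Poly_L. eapply Poly_ext. apply (IHd _ _ _ _ Hf Hg).
    intros n. unfold Df. ring. ring.
Qed.

Lemma Poly_scal d : forall f L k, Poly d f L -> Poly d (fun n => k * f n) (k * L).
Proof.
  induction d; intros f L k Hf; simpl in *.
  - intros n. rewrite Hf. reflexivity.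
  - eapply Poly_L. eapply Poly_ext. apply (IHd _ _ k Hf).
    intros n. unfold Df. ring. ring.
Qed.

Lemma Poly_shift d : forall f L, Poly d f L -> Poly d (fun n => f (S n)) L.
Proof.
  induction d; intros f L Hf; simpl in *.
  - intros n. apply Hf.
  - apply (IHd _ _ Hf).
Qed.

Lemma Poly_mullin (r c : R) d : forall f L, Poly d f L ->
  Poly (S d) (fun n => (r * INR n + c) * f n) (r * L).
Proof.
  induction d; intros f L Hf.
  - simpl in *. intros n. unfold Df. rewrite !Hf. rewrite S_INR. ring.
  - change (Poly (S d) (Df (fun n => (r * INR n + c) * f n)) (INR (S (S d)) * (r * L))).
    assert (H1 : Poly (S d) (fun n => (r * INR n + c) * Df f n) (r * (INR (S d) * L))).
    { apply IHd. exact Hf. }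
    assert (H2 : Poly (S d) (fun n => r * f (S n)) (r * L)).
    { apply Poly_scal, Poly_shift. exact Hf. }
    eapply Poly_L. eapply Poly_ext. apply (Poly_plus _ _ _ _ _ H1 H2).
    intros n. unfold Df. rewrite S_INR. ring.
    rewrite (S_INR (S d)). ring.
Qed.

Lemma Poly_pow (r c : R) d : Poly d (fun n => (r * INR n + c) ^ d) (r ^ d).
Proof.
  induction d.
  - simpl. intros n. reflexivity.
  - eapply Poly_ext. apply (Poly_mullin r c d _ _ IHd). intros n. simpl. reflexivity.
Qed.

Lemma Tsum_Poly N : forall f L, Poly N f L -> Tsum N f = L.
Proof.
  induction N; intros f L H.
  - simpl in H. unfold Tsum, Wt. rewrite sum_O. simpl. rewrite H. field.
  - simpl in H. pose proof (Tsum_S N f) as E. rewrite (IHN _ _ H) in E.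
    assert (0 < INR (S N)) by (apply lt_0_INR; lia).
    apply (Rmult_eq_reg_l (INR (S N))). rewrite E. reflexivity. lra.
Qed.

Lemma findiff (r c : R) N : Tsum N (fun n => (r * INR n + c) ^ N) = r ^ N.
Proof. apply Tsum_Poly, Poly_pow. Qed.

Lemma Cexp_add z w : Cexp (z + w)%C = (Cexp z * Cexp w)%C.
Proof.
  destruct z as [a b], w as [c d]. unfold Cexp. simpl.
  rewrite exp_plus, cos_plus, sin_plus. unfold Cmult. simpl. f_equal; ring.
Qed.

Lemma Cexp_0 : Cexp (RtoC 0) = RtoC 1.
Proof. unfold Cexp, RtoC. simpl. rewrite exp_0, cos_0, sin_0. f_equal; ring. Qed.

Lemma Cexp_nat k z : Cexp (RtoC (INR k) * z)%C = (Cexp z ^ k)%C.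
Proof.
  induction k.
  - simpl. replace (RtoC 0 * z)%C with (RtoC 0) by ring. apply Cexp_0.
  - replace (RtoC (INR (S k)) * z)%C with (z + RtoC (INR k) * z)%C.
    rewrite Cexp_add, IHk, Cpow_S. reflexivity.
    rewrite S_INR, RtoC_plus. ring.
Qed.

Lemma geomC_partial (z : C) M : ((RtoC 1 - z) * sum_n (fun N => z ^ N) M)%C = (RtoC 1 - z ^ (S M))%C.
Proof.
  induction M.
  - rewrite sum_O. simpl. ring.
  - rewrite sumC_S. rewrite Cmult_plus_distr_l, IHM. simpl. ring.
Qed.

Lemma geomC (z : C) : Cmod z < 1 -> is_series (fun N => z ^ N)%C (/ (RtoC 1 - z))%C.
Proof.
  intros Hz.
  assert (Hnz : (RtoC 1 - z)%C <> RtoC 0).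
  { intro E. assert (z = RtoC 1) by (replace z with (RtoC 1 - (RtoC 1 - z))%C by ring; rewrite E; ring).
    subst. rewrite Cmod_1 in Hz. lra. }
  assert (Hm : 0 < Cmod (RtoC 1 - z)%C) by (apply Cmod_gt_0; auto).
  apply Ceps. intros eps He.
  assert (HzR : Rabs (Cmod z) < 1) by (rewrite Rabs_right; [lra| apply Rle_ge, Cmod_ge_0]).
  destruct (pow_lt_1_zero _ HzR (eps * Cmod (RtoC 1 - z)%C) ltac:(apply Rmult_lt_0_compat; lra)) as [N HN].
  exists N. intros n Hn. specialize (HN (S n) ltac:(lia)).
  assert (E : (sum_n (fun N => z ^ N) n - / (RtoC 1 - z))%C = (- z ^ (S n) / (RtoC 1 - z))%C).
  { apply (Cmult_reg_l (RtoC 1 - z)%C). auto.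
    replace ((RtoC 1 - z) * (sum_n (fun N => z ^ N) n - / (RtoC 1 - z)))%C with
      ((RtoC 1 - z) * sum_n (fun N => z ^ N) n - RtoC 1)%C by (field; auto).
    rewrite geomC_partial. field. auto. }
  rewrite E. unfold Cdiv. rewrite Cmod_mult, Cmod_opp, Cmod_inv, Cmod_pow by auto.
  rewrite Rabs_right in HN by (apply Rle_ge, pow_le, Cmod_ge_0).
  apply (Rmult_lt_reg_r (Cmod (RtoC 1 - z)%C)). auto.
  rewrite Rmult_assoc, Rinv_l by lra. lra.
Qed.

Lemma exp_nat_mult n y : exp (INR n * y) = exp y ^ n.
Proof.
  induction n. simpl. rewrite Rmult_0_l. apply exp_0.
  rewrite S_INR, Rmult_plus_distr_r, Rmult_1_l, exp_plus, IHn. simpl. ring.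
Qed.

Lemma exp_half_lt_2 : exp (/2) < 2.
Proof.
  assert (H : exp (/2) * exp (/2) = exp 1) by (rewrite <- exp_plus; f_equal; field).
  pose proof exp_le_3. pose proof (exp_pos (/2)). nra.
Qed.

Lemma bbdiag (m : R) (u : C) N n : (n <= N)%nat ->
  (ef (RtoC m * u) n * ef (RtoC (- m) * u) (N - n))%C = (RtoC (Wt N n * m ^ N) * u ^ N)%C.
Proof.
  intros Hn. unfold ef, Wt. rewrite !Cpow_mult_l, <- !RtoC_pow.
  replace (u ^ N)%C with (u ^ n * u ^ (N - n))%C by (rewrite <- Cpow_add_r; f_equal; lia).
  replace (RtoC (/ INR (fact n)) * (RtoC (m ^ n) * u ^ n) *
    (RtoC (/ INR (fact (N - n))) * (RtoC ((- m) ^ (N - n)) * u ^ (N - n))))%C with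
    (RtoC (/ INR (fact n) * m ^ n * / INR (fact (N - n)) * (- m) ^ (N - n)) * (u ^ n * u ^ (N - n)))%C
    by (rewrite !RtoC_mult; ring).
  f_equal. f_equal.
  replace (- m) with (-1 * m) by ring. rewrite Rpow_mult_distr.
  replace (m ^ N) with (m ^ n * m ^ (N - n)) by (rewrite <- pow_add; f_equal; lia).
  field. split; apply INR_fact_neq_0.
Qed.

Lemma MS (r c : nat) (u : C) : (1 <= r)%nat -> (c < r)%nat -> 16 * INR r * Cmod u <= 1 ->
  is_series (fun n => (ef (RtoC (INR (r * n + c)) * u) n *
                       Cexp (RtoC (- INR (r * n + c)) * u))%C)
    (/ (RtoC 1 - RtoC (INR r) * u))%C.
Proof.
  intros Hr Hc Hu.
  set (m := fun n => INR (r * n + c)).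
  set (s := Cmod u).
  assert (Hs : 0 <= s) by apply Cmod_ge_0.
  assert (HrR : 1 <= INR r) by (apply (le_INR 1); auto).
  set (bb := fun n k => (ef (RtoC (m n) * u) n * ef (RtoC (- m n) * u) k)%C).
  set (A := fun n => (ef (RtoC (m n) * u) n * Cexp (RtoC (- m n) * u))%C).
  set (q := exp (8 * INR r * s) / 4).
  assert (Hq : 0 <= q < /2).
  { unfold q. split. apply Rdiv_le_0_compat. apply Rlt_le, exp_pos. lra.
    assert (exp (8 * INR r * s) <= exp (/2)).
    { unfold s in *. destruct (Rlt_or_le (8 * INR r * Cmod u) (/2)) as [L|L].
      apply Rlt_le, exp_increasing; auto.
      replace (8 * INR r * Cmod u) with (/2) by lra. lra. }
    pose proof exp_half_lt_2. lra. }
  assert (Hm0 : forall n, 0 <= m n) by (intros; apply pos_INR).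
  assert (Hb : forall n k, Cmod (bb n k) <= exp (8 * INR c * s) * q ^ (n + k)).
  { intros n k. unfold bb. rewrite Cmod_mult.
    pose proof (ef_bound (RtoC (m n) * u) n) as B1.
    pose proof (ef_bound (RtoC (- m n) * u) k) as B2.
    rewrite Cmod_mult, Cmod_R, Rabs_right in B1 by (apply Rle_ge; auto).
    rewrite Cmod_mult, Cmod_R, Rabs_Ropp, Rabs_right in B2 by (apply Rle_ge; auto).
    fold s in B1, B2.
    pose proof (Cmod_ge_0 (ef (RtoC (m n) * u) n)). pose proof (Cmod_ge_0 (ef (RtoC (- m n) * u) k)).
    eapply Rle_trans. apply Rmult_le_compat; eauto.
    assert (E : exp (4 * (m n * s)) * (/ 4) ^ n * (exp (4 * (m n * s)) * (/ 4) ^ k) =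
      exp (8 * INR c * s) * ((exp (8 * INR r * s) / 4) ^ n * (/4) ^ k)).
    { unfold Rdiv. rewrite Rpow_mult_distr. rewrite <- exp_nat_mult.
      replace (exp (8 * INR c * s) * (exp (INR n * (8 * INR r * s)) * (/ 4) ^ n * (/ 4) ^ k))
        with (exp (8 * INR c * s + INR n * (8 * INR r * s)) * ((/ 4) ^ n * (/ 4) ^ k))
        by (rewrite exp_plus; ring).
      replace (8 * INR c * s + INR n * (8 * INR r * s)) with (4 * (m n * s) + 4 * (m n * s)).
      rewrite exp_plus. ring.
      unfold m. rewrite plus_INR, mult_INR. ring. }
    rewrite E. rewrite pow_add. apply Rmult_le_compat_l. apply Rlt_le, exp_pos.
    fold q. apply Rmult_le_compat_l. apply pow_le; lra.
    apply pow_incr. split. lra. unfold q.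
    assert (1 <= exp (8 * INR r * s)).
    { pose proof (exp_ineq1_le (8 * INR r * s)). nra. }
    lra. }
  assert (HA : forall n, is_series (bb n) (A n)).
  { intros n. unfold bb, A.
    pose proof (is_series_scal (ef (RtoC (m n) * u) n) _ _ (Cexp_series (RtoC (- m n) * u))) as H.
    eapply is_series_ext. 2: exact H. intros k. reflexivity. }
  assert (Hc0 : 0 <= exp (8 * INR c * s)) by (apply Rlt_le, exp_pos).
  pose proof (GF bb A _ q Hc0 Hq Hb HA (/ (RtoC 1 - RtoC (INR r) * u))%C) as [_ HG].
  apply HG.
  assert (Hg : Cmod (RtoC (INR r) * u)%C < 1).
  { rewrite Cmod_mult, Cmod_R, Rabs_right by lra. unfold s in *. nra. }
  eapply is_series_ext. 2: apply (geomC _ Hg).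
  intros N. simpl.
  rewrite (sumC_ext _ (fun n => RtoC (Wt N n * (INR r * INR n + INR c) ^ N) * u ^ N)%C).
  2:{ intros n Hn. unfold bb. rewrite bbdiag by auto. unfold m.
      rewrite plus_INR, mult_INR. reflexivity. }
  rewrite (sumC_ext _ (fun n => u ^ N * RtoC (Wt N n * (INR r * INR n + INR c) ^ N))%C).
  2:{ intros n _. apply Cmult_comm. }
  rewrite sumC_mult_l, sum_RtoC.
  change (sum_n (fun n => Wt N n * (INR r * INR n + INR c) ^ N) N) with
    (Tsum N (fun n => (INR r * INR n + INR c) ^ N)).
  rewrite findiff. rewrite Cpow_mult_l, RtoC_pow. apply Cmult_comm.
Qed.

Lemma J_pow r k : (J r ^ k)%C = (cos (INR k * (2 * PI / INR r)), sin (INR k * (2 * PI / INR r))).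
Proof.
  induction k.
  - simpl. rewrite Rmult_0_l, cos_0, sin_0. reflexivity.
  - rewrite Cpow_S, IHk. unfold J. rewrite S_INR.
    replace ((INR k + 1) * (2 * PI / INR r)) with (2 * PI / INR r + INR k * (2 * PI / INR r)) by ring.
    rewrite cos_plus, sin_plus. unfold Cmult. simpl. f_equal; ring.
Qed.

Lemma J_r r : (1 <= r)%nat -> (J r ^ r)%C = RtoC 1.
Proof.
  intros Hr. rewrite J_pow.
  replace (INR r * (2 * PI / INR r)) with (2 * PI).
  rewrite cos_2PI, sin_2PI. reflexivity.
  field. apply not_0_INR. lia.
Qed.

Lemma J_nz r : J r <> RtoC 0.
Proof.
  intros E. unfold J, RtoC in E. injection E as E1 E2.
  apply (cos_sin_0 (2 * PI / INR r)). auto.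
Qed.

Lemma J_pow_ne1 r k : (0 < k < r)%nat -> (J r ^ k)%C <> RtoC 1.
Proof.
  intros Hk E. rewrite J_pow in E. unfold RtoC in E. injection E as E1 E2.
  assert (Hr : 0 < INR r) by (apply lt_0_INR; lia).
  assert (Hkr : INR k < INR r) by (apply lt_INR; lia).
  assert (Hk0 : 0 < INR k) by (apply lt_0_INR; lia).
  pose proof PI_RGT_0.
  set (t := INR k * (2 * PI / INR r)) in *.
  assert (0 < t < 2 * PI).
  { unfold t. split. apply Rmult_lt_0_compat; auto. apply Rdiv_lt_0_compat; lra.
    replace (INR k * (2 * PI / INR r)) with ((2 * PI) * (INR k / INR r)) by (field; lra).
    assert (INR k / INR r < 1). { apply (Rmult_lt_reg_r (INR r)); auto. field_simplify; lra. }
    nra. }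
  destruct (sin_eq_O_2PI_0 t ltac:(lra) ltac:(lra) E2) as [Ht|[Ht|Ht]]; try lra.
  rewrite Ht, cos_PI in E1. lra.
Qed.

Definition Jw (r : nat) : C := (/ J r)%C.

Lemma Jw_nz r : Jw r <> RtoC 0.
Proof.
  unfold Jw. intros E. pose proof (Cinv_r (J r) (J_nz r)) as H.
  rewrite E, Cmult_0_r in H. apply RtoC_inj in H. lra.
Qed.

Lemma Jw_pow_r r : (1 <= r)%nat -> (Jw r ^ r)%C = RtoC 1.
Proof.
  intros Hr. unfold Jw. rewrite Cpow_inv by apply J_nz. rewrite J_r by auto.
  field; intro E; apply RtoC_inj in E; lra.
Qed.

Lemma Jw_pow_ne1 r k : (1 <= r)%nat -> (0 < k < 2 * r)%nat -> k <> r -> (Jw r ^ k)%C <> RtoC 1.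
Proof.
  intros Hr Hk Hkr E. unfold Jw in E. rewrite Cpow_inv in E by apply J_nz.
  assert (E2 : (J r ^ k)%C = RtoC 1).
  { replace (J r ^ k)%C with (/ / J r ^ k)%C by (field; apply Cpow_nz, J_nz).
    rewrite E. field; intro E3; apply RtoC_inj in E3; lra. }
  destruct (Nat.lt_ge_cases k r).
  - apply (J_pow_ne1 r k); auto. lia.
  - apply (J_pow_ne1 r (k - r)). lia.
    replace k with (r + (k - r))%nat in E2 by lia. rewrite Cpow_add_r, J_r in E2 by auto.
    rewrite <- E2. ring.
Qed.

Lemma root_sum (z : C) r : (1 <= r)%nat -> (z ^ r)%C = RtoC 1 ->
  sum_n (fun i => z ^ i)%C (r - 1) = (if Ceq_dec z (RtoC 1) then RtoC (INR r) else RtoC 0).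
Proof.
  intros Hr Hz. destruct (Ceq_dec z (RtoC 1)) as [E|E].
  - subst. rewrite (sumC_ext _ (fun _ => RtoC 1)). 2:{ intros; apply Cpow_1_l. }
    transitivity (RtoC (sum_n (fun _ => 1) (r - 1))). apply (sum_RtoC (fun _ => 1)). rewrite sum_const_R.
    replace (S (r - 1)) with r by lia. f_equal. ring.
  - pose proof (geomC_partial z (r - 1)) as H. replace (S (r - 1)) with r in H by lia.
    rewrite Hz in H. replace (RtoC 1 - RtoC 1)%C with (RtoC 0) in H by ring.
    apply (Cmult_reg_l (RtoC 1 - z)). intros E2. apply E.
    replace z with (RtoC 1 - (RtoC 1 - z))%C by ring. rewrite E2. ring.
    rewrite H. ring.
Qed.

Lemma sumC_swap (f : nat -> nat -> C) N M :
  sum_n (fun i => sum_n (fun m => f i m) M) N = sum_n (fun m => sum_n (fun i => f i m) N) M.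
Proof.
  induction N.
  - rewrite sum_O. apply sumC_ext. intros. rewrite sum_O. reflexivity.
  - rewrite sumC_S, IHN. rewrite <- sumC_plus. apply sumC_ext. intros m _.
    rewrite sumC_S. reflexivity.
Qed.

Lemma sumC_zero (f : nat -> C) M : (forall m, (m <= M)%nat -> f m = RtoC 0) -> sum_n f M = RtoC 0.
Proof.
  induction M; intros H.
  - rewrite sum_O. apply H. lia.
  - rewrite sumC_S, IHM. rewrite H by lia. cceq; ring. intros; apply H; lia.
Qed.

Lemma sumC_single (f : nat -> C) M c : (c <= M)%nat ->
  (forall m, (m <= M)%nat -> m <> c -> f m = RtoC 0) -> sum_n f M = f c.
Proof.
  induction M; intros Hc H.
  - rewrite sum_O. f_equal. lia.
  - rewrite sumC_S. destruct (Nat.eq_dec c (S M)) as [E|E].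
    + subst. rewrite sumC_zero. cceq; ring. intros m Hm. apply H; lia.
    + rewrite IHM by (try lia; intros; apply H; lia). rewrite (H (S M)) by lia. cceq; ring.
Qed.

Definition rho (r : nat) : R := Rpower (INR r) (- / INR r).

Lemma rho_pos r : 0 < rho r.
Proof. unfold rho, Rpower. apply exp_pos. Qed.

Lemma rho_pow r : (1 <= r)%nat -> rho r ^ r = / INR r.
Proof.
  intros Hr. assert (0 < INR r) by (apply lt_0_INR; lia).
  unfold rho. rewrite <- Rpower_pow by (unfold Rpower; apply exp_pos).
  rewrite Rpower_mult. replace (- / INR r * INR r) with (- (1)) by (field; lra).
  rewrite Rpower_Ropp, Rpower_1 by lra. reflexivity.
Qed.

Lemma per_root (z y : C) (p : R) r a : (1 <= r)%nat -> 0 < p -> z <> RtoC 0 ->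
  (z ^ r)%C = RtoC 1 -> p ^ r = / INR r ->
  (RtoC p * / z - y)%C <> RtoC 0 -> (RtoC 1 - RtoC (INR r) * y ^ r)%C <> RtoC 0 ->
  (z ^ (a + 1) * / z / (RtoC p * / z - y))%C =
  (sum_n (fun m => y ^ m * (/ RtoC p) ^ (S m) * z ^ (a + 1 + m)) (r - 1) /
     (RtoC 1 - RtoC (INR r) * y ^ r))%C.
Proof.
  intros Hr Hp Hz Hzr Hpr Hd HD.
  assert (Hp' : RtoC p <> RtoC 0) by (intro E; apply RtoC_inj in E; lra).
  set (v := (z * / RtoC p)%C).
  set (G := sum_n (fun m => (y * v) ^ m)%C (r - 1)).
  assert (HG : ((RtoC 1 - y * v) * G)%C = (RtoC 1 - RtoC (INR r) * y ^ r)%C).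
  { unfold G. rewrite geomC_partial. replace (S (r - 1)) with r by lia.
    unfold v. rewrite !Cpow_mult_l, Hzr, Cpow_inv by auto. rewrite <- RtoC_pow, Hpr.
    rewrite RtoC_inv. field. repeat split; auto. intro E; apply RtoC_inj in E.
    assert (0 < INR r) by (apply lt_0_INR; lia). lra.
    assert (0 < INR r) by (apply lt_0_INR; lia). lra. }
  assert (HG0 : G <> RtoC 0). { intro E. rewrite E, Cmult_0_r in HG. auto. }
  assert (Hyv : (RtoC 1 - y * v)%C <> RtoC 0). { intro E. rewrite E, Cmult_0_l in HG. auto. }
  rewrite (sumC_ext _ (fun m => z ^ (a + 1) * / RtoC p * (y * v) ^ m)%C).
  2:{ intros m _. unfold v. rewrite !Cpow_mult_l, Cpow_add_r, Cpow_S. ring. }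
  rewrite sumC_mult_l. fold G. rewrite <- HG.
  assert (EG : sum_n (Cpow (y * v)) (r - 1) = G) by reflexivity.
  rewrite EG. clearbody G. unfold v in *. cceq. field. repeat split; auto.
  intro E. apply Hyv. replace (RtoC 1 - y * (z * / RtoC p))%C with ((RtoC p - y * z) * / RtoC p)%C
    by (field; auto). rewrite E. ring.
Qed.

Lemma xi_tilde_eq r a y : (1 <= r)%nat -> (a < r)%nat ->
  (forall i, (RtoC (rho r) * J r ^ i - y)%C <> RtoC 0) ->
  (RtoC 1 - RtoC (INR r) * y ^ r)%C <> RtoC 0 ->
  xi_tilde r a y =
  (CI * RtoC (sqrt 2) * RtoC (Rpower (INR r) (- / 2 - / INR r)) *
   RtoC ((/ rho r) ^ (r - a)) * y ^ (r - a - 1) / (RtoC 1 - RtoC (INR r) * y ^ r))%C.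
Proof.
  intros Hr Ha Hd HD.
  set (K := (CI * RtoC (sqrt 2) * RtoC (Rpower (INR r) (- / 2 - / INR r)))%C).
  set (D := (RtoC 1 - RtoC (INR r) * y ^ r)%C) in *.
  assert (Hr0 : RtoC (INR r) <> RtoC 0).
  { intro E. apply RtoC_inj in E. assert (0 < INR r) by (apply lt_0_INR; lia). lra. }
  assert (Hrho : RtoC (rho r) <> RtoC 0).
  { intro E. apply RtoC_inj in E. pose proof (rho_pos r). lra. }
  unfold xi_tilde.
  rewrite (sumC_ext _ (fun i => (/ RtoC (INR r) * K / D) *
     sum_n (fun m => y ^ m * (/ RtoC (rho r)) ^ (S m) * (Jw r ^ i) ^ (a + 1 + m)) (r - 1))%C).
  2:{ intros i _. unfold xi. change (Rpower (INR r) (- / INR r)) with (rho r). fold K.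
      set (w := (Jw r ^ i)%C).
      assert (Hw0 : w <> RtoC 0) by (apply Cpow_nz, Jw_nz).
      assert (Hw : (J r ^ i)%C = (/ w)%C).
      { unfold w, Jw. rewrite Cpow_inv by apply J_nz. field. apply Cpow_nz, J_nz. }
      assert (Hwr : (w ^ r)%C = RtoC 1).
      { unfold w. rewrite <- Cpow_mult_r, Nat.mul_comm, Cpow_mult_r, Jw_pow_r by auto. apply Cpow_1_l. }
      assert (Hc : Cpow (/ J r) ((a + 1) * i) = (w ^ (a + 1))%C).
      { change (/ J r)%C with (Jw r). rewrite Nat.mul_comm, Cpow_mult_r. reflexivity. }
      rewrite Hc, Hw.
      assert (Hd' : (RtoC (rho r) * / w - y)%C <> RtoC 0) by (rewrite <- Hw; apply Hd).
      pose proof (per_root w y (rho r) r a Hr (rho_pos r) Hw0 Hwr (rho_pow r Hr) Hd' HD) as PR.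
      transitivity (/ RtoC (INR r) * K * (w ^ (a + 1) * / w / (RtoC (rho r) * / w - y)))%C.
      cceq. unfold Cdiv. ring.
      rewrite PR. fold D. cceq. unfold Cdiv. ring. }
  rewrite sumC_mult_l, sumC_swap.
  rewrite (sumC_ext _ (fun m => y ^ m * (/ RtoC (rho r)) ^ (S m) *
     (if Ceq_dec (Jw r ^ (a + 1 + m)) (RtoC 1) then RtoC (INR r) else RtoC 0))%C).
  2:{ intros m _. rewrite <- root_sum; auto.
      2:{ rewrite <- Cpow_mult_r, Nat.mul_comm, Cpow_mult_r, Jw_pow_r by auto. apply Cpow_1_l. }
      rewrite <- sumC_mult_l. apply sumC_ext. intros i _.
      rewrite <- !Cpow_mult_r, Nat.mul_comm. reflexivity. }
  rewrite (sumC_single _ (r - 1) (r - a - 1)). 3:{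
    intros m Hm Hmc. destruct (Ceq_dec (Jw r ^ (a + 1 + m)) (RtoC 1)) as [E|E].
    - exfalso. apply (Jw_pow_ne1 r (a + 1 + m)); auto; lia.
    - cceq. ring. }
  2: lia.
  destruct (Ceq_dec (Jw r ^ (a + 1 + (r - a - 1))) (RtoC 1)) as [E|E].
  2:{ exfalso. apply E. replace (a + 1 + (r - a - 1))%nat with r by lia. apply Jw_pow_r; auto. }
  replace (S (r - a - 1)) with (r - a)%nat by lia.
  rewrite RtoC_pow, RtoC_inv by (pose proof (rho_pos r); lra).
  fold K. cceq. field. split; auto.
Qed.

Lemma pow_le_self x n : 0 <= x <= 1 -> (1 <= n)%nat -> x ^ n <= x.
Proof.
  intros Hx Hn. replace n with (S (n - 1)) by lia. simpl.
  assert (x ^ (n - 1) <= 1). { rewrite <- (pow1 (n - 1)). apply pow_incr. lra. }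
  assert (0 <= x ^ (n - 1)) by (apply pow_le; lra). nra.
Qed.

Lemma Cmod_J r : Cmod (J r) = 1.
Proof.
  unfold Cmod. replace (fst (J r) ^ 2 + snd (J r) ^ 2) with 1. apply sqrt_1.
  unfold J; simpl. pose proof (sin2_cos2 (2 * PI / INR r)). unfold Rsqr in H. nra.
Qed.

Theorem lemma4p5 (r a : nat) :
  (1 <= r)%nat -> (a < r)%nat ->
  exists delta : R, 0 < delta /\
    forall x y : C,
      0 < Cmod y < delta ->
      Cexp x = (y * Cexp (- Cpow y r))%C ->
      exists S : C,
        is_series
          (fun n : nat =>
             (RtoC (pow (INR (r * n + r - a - 1)) n / INR (Factorial.fact n))
              * Cexp (RtoC (INR (r * n + r - a - 1)) * x))%C)
          S /\
        xi_tilde r a y =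
          (CI * RtoC (sqrt 2)
           * RtoC (Rpower (INR r) (/ 2 - INR (a + 1) / INR r)) * S)%C.
Proof.
  intros Hr Ha.
  assert (HrR : 1 <= INR r) by (apply (le_INR 1); auto).
  exists (/ (16 * INR r)). split. apply Rinv_0_lt_compat. lra.
  intros x y Hy Hx.
  set (c := (r - a - 1)%nat).
  set (u := (y ^ r)%C).
  set (D := (RtoC 1 - RtoC (INR r) * u)%C).
  assert (Hdl : / (16 * INR r) <= / 16).
  { apply Rinv_le_contravar; lra. }
  assert (Hu : Cmod u <= Cmod y).
  { unfold u. rewrite Cmod_pow. apply pow_le_self; auto. pose proof (Cmod_ge_0 y). lra. }
  assert (Hu2 : 16 * INR r * Cmod u < 1).
  { assert (Cmod u < / (16 * INR r)) by lra.
    apply (Rmult_lt_compat_l (16 * INR r)) in H. 2: lra.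
    rewrite Rinv_r in H by lra. lra. }
  exists (y ^ c * / D)%C. split.
  - pose proof (MS r c u Hr ltac:(unfold c; lia) ltac:(lra)) as H.
    apply (is_series_scal (y ^ c)%C) in H.
    eapply is_series_ext. 2: exact H. intros n.
    change (y ^ c * (ef (RtoC (INR (r * n + c)) * u) n * Cexp (RtoC (- INR (r * n + c)) * u))
      = RtoC (INR (r * n + r - a - 1) ^ n / INR (fact n)) * Cexp (RtoC (INR (r * n + r - a - 1)) * x))%C.
    replace (r * n + r - a - 1)%nat with (r * n + c)%nat by (unfold c; lia).
    set (M := (r * n + c)%nat).
    rewrite Cexp_nat, Hx, Cpow_mult_l, <- Cexp_nat.
    replace (RtoC (INR M) * - y ^ r)%C with (RtoC (- INR M) * u)%C by (unfold u; rewrite RtoC_opp; ring).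
    replace (y ^ M)%C with (y ^ c * u ^ n)%C.
    2:{ unfold M, u. rewrite Cpow_add_r, Cpow_mult_r. ring. }
    unfold ef. rewrite Cpow_mult_l. unfold Rdiv. rewrite RtoC_mult, RtoC_pow. cceq. ring.
  - assert (HD : D <> RtoC 0).
    { intro E. unfold D in E. assert (E2 : (RtoC (INR r) * u)%C = RtoC 1).
      { replace (RtoC (INR r) * u)%C with (RtoC 1 - (RtoC 1 - RtoC (INR r) * u))%C by ring.
        rewrite E. ring. }
      apply (f_equal Cmod) in E2. rewrite Cmod_mult, Cmod_R, Cmod_1, Rabs_right in E2 by lra.
      nra. }
    assert (Hd : forall i, (RtoC (rho r) * J r ^ i - y)%C <> RtoC 0).
    { intros i E. assert (Ey : y = (RtoC (rho r) * J r ^ i)%C).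
      { replace y with (RtoC (rho r) * J r ^ i - (RtoC (rho r) * J r ^ i - y))%C by ring.
        rewrite E. ring. }
      assert (Cmod y = rho r).
      { rewrite Ey, Cmod_mult, Cmod_pow, Cmod_J, pow1, Cmod_R, Rabs_right. ring.
        apply Rle_ge, Rlt_le, rho_pos. }
      assert (Cmod u = / INR r). { unfold u. rewrite Cmod_pow, H. apply rho_pow; auto. }
      rewrite H0 in Hu2.
      replace (16 * INR r * / INR r) with 16 in Hu2 by (field; lra). lra. }
    rewrite (xi_tilde_eq r a y Hr Ha Hd HD). fold u. fold D. fold c.
    assert (Hpow : Rpower (INR r) (- / 2 - / INR r) * (/ rho r) ^ (r - a) =
       Rpower (INR r) (/ 2 - INR (a + 1) / INR r)).
    { assert (Hinv : / rho r = Rpower (INR r) (/ INR r)).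
      { unfold rho. rewrite Rpower_Ropp, Rinv_inv. reflexivity. }
      rewrite Hinv. rewrite <- Rpower_pow by (unfold Rpower; apply exp_pos).
      rewrite Rpower_mult, <- Rpower_plus. f_equal.
      rewrite minus_INR by lia. rewrite plus_INR. simpl (INR 1). field. lra. }
    rewrite <- Hpow. rewrite RtoC_mult. unfold Cdiv. cceq. ring.
Qed.
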